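(* Let $s\ge 1$ and let $i,j$ be integers with $s\le j<i\le 2s$. Define $$U(s,i,j)=(-1)^{s+i+j}\,i\binom{2s}{i}\sum_{j'=0}^{s}\sum_{t=1}^{s-j'}\frac{(-1)^{j'+t+1}}{t}\binom{i-j'-1}{s+t-1}\binom{s}{t-1}\binom{s}{j-j'}\binom{s-j'}{t}^{-1}.$$ Then $U(s,i,j)=(-1)^{j+1}\binom{2s}{j}$.
   Context: Binomial coefficients $\binom{a}{b}$ are zero when $b<0$ or $b>a\ge 0$. An empty inner sum is $0$. *)

(* Defs.v *)
From mathcomp Require Import all_boot all_order all_algebra.
Set Implicit Arguments. Unset Strict Implicit. Unset Printing Implicit Defensive.
Import Order.TTheory GRing.Theory Num.Theory.
Local Open Scope ring_scope.

(* U(s,i,j) over the rationals. Within the range s <= j < i <= 2s, 0 <= j' <= s,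
   1 <= t <= s - j', all nat subtractions below are exact (non-truncating). *)
Definition U (s i j : nat) : rat :=
  (-1) ^+ (s + i + j) * i%:R * ('C(2 * s, i))%:R *
  \sum_(0 <= j' < s.+1) \sum_(1 <= t < (s - j').+1)
     ((-1) ^+ (j' + t + 1) / t%:R * ('C(i - j' - 1, s + t - 1))%:R
      * ('C(s, t - 1))%:R * ('C(s, j - j'))%:R / ('C(s - j', t))%:R).

(* Main.v *)
Require Import Defs.
From mathcomp Require Import all_boot all_order all_algebra.
From mathcomp Require Import zify ring lra.
Import GRing.Theory Num.Theory.
Local Open Scope ring_scope.

Lemma coefX1 n k : ((('X + 1 : {poly rat}) ^+ n)`_k) = ('C(n, k))%:R.
Proof.
elim: n k => [|n IH] k.
  by rewrite expr0 coefC bin0n; case: k.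
rewrite exprS mulrDl mul1r coefD coefXM.
case: k => [|k] /=; first by rewrite IH !bin0 add0r.
by rewrite !IH binS natrD addrC.
Qed.

Lemma binE' n k : (k <= n)%N ->
  ('C(n, k))%:R = (n`!)%:R / ((k`!)%:R * ((n - k)`!)%:R) :> rat.
Proof.
move=> hk; rewrite -(bin_fact hk) !natrM mulfK //.
by rewrite mulf_neq0 // pnatr_eq0 -lt0n fact_gt0.
Qed.

Arguments binE' {n k}.

Lemma fact_neq0 n : ((n`!)%:R : rat) != 0.
Proof. by rewrite pnatr_eq0 -lt0n fact_gt0. Qed.

Lemma trinom n m l : ('C(n, m) * 'C(n - m, l) = 'C(n, l) * 'C(n - l, m))%N.
Proof.
case: (leqP m n) => hm; last by rewrite bin_small // (@bin_small (n - l)) ?muln0 //; lia.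
case: (leqP l n) => hl; last by rewrite (bin_small hl) (@bin_small (n - m)) ?muln0 //; lia.
case: (leqP l (n - m)) => hlm; last first.
  rewrite (bin_small hlm) (@bin_small (n - l)) ?muln0 //; lia.
have hml : (m <= n - l)%N by lia.
apply/eqP; rewrite -(eqr_nat rat) !natrM.
rewrite (binE' hm) (binE' hl) (binE' hlm) (binE' hml).
have -> : (n - m - l = n - l - m)%N by lia.
apply/eqP; field.
by rewrite !fact_neq0.
Qed.

Lemma vand_shift f e n :
  (\sum_(k < f.+1) 'C(f, f - k) * 'C(n, e + k) = 'C(f + n, f + e))%N.
Proof.
rewrite -(binomial.Vandermonde f n (f + e)) -(big_mkord xpredT (fun k => 'C(f, f - k) * 'C(n, e + k)))%N.
rewrite -(big_mkord xpredT (fun j => 'C(f, j) * 'C(n, f + e - j)))%N.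
rewrite [RHS](@big_cat_nat _ _ _ f.+1) //=; last by rewrite ltnS leq_addr.
rewrite [X in (_ = _ + X)%N]big1_seq ?addn0; last first.
  move=> j /andP[_]; rewrite mem_index_iota => /andP[hj _].
  by rewrite bin_small.
rewrite big_nat_rev /=; apply: eq_big_nat => k /andP[_ hk].
rewrite add0n; congr (_ * 'C(_, _))%N; first congr 'C(_, _); lia.
Qed.

Lemma core s e f u :
  ('C(s, u) * 'C(s + f - u, e + f) =
   \sum_(k < f.+1) 'C(s, e + k) * 'C(f, f - k) * 'C(s - (e + k), u))%N.
Proof.
case: (leqP u s) => hu; last first.
  rewrite bin_small // mul0n big1 // => k _; rewrite (@bin_small (s - (e + k)) u) ?muln0 //; lia.
transitivity (\sum_(k < f.+1) 'C(s, u) * ('C(f, f - k) * 'C(s - u, e + k)))%N; last first.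
  apply: eq_bigr => k _; rewrite [RHS]mulnAC trinom; ring.
rewrite -big_distrr /= vand_shift; congr (_ * 'C(_, _))%N; lia.
Qed.
Definition R (b M : nat) : {poly rat} :=
  \sum_(r < M) (((-1) ^+ r * ('C(r, b))%:R) *: 'X^r).

Lemma coefR b M n : (R b M)`_n = if (n < M)%N then (-1) ^+ n * ('C(n, b))%:R else 0.
Proof. by rewrite /R -(poly_def M (fun r => (-1) ^+ r * ('C(r, b))%:R)) coef_poly. Qed.

Lemma R_S b M : R b M.+1 = R b M + ((-1) ^+ M * ('C(M, b))%:R) *: 'X^M.
Proof. by rewrite /R big_ord_recr. Qed.

Lemma Rrel b M : ('X + 1) * R b.+1 M + 'X * R b M =
  ((-1) ^+ M.+1 * ('C(M, b.+1))%:R) *: 'X^M.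
Proof.
elim: M => [|M IH]; first by rewrite /R !big_ord0 !mulr0 addr0 /= scale0r.
rewrite !R_S !mulrDr addrACA IH binS natrD -!mul_polyC exprS !exprSr.
rewrite !rmorphM !rmorphD /= !rmorphN /= !rmorph1. ring.
Qed.

Lemma R0rel M : ('X + 1) * R 0 M = 1 - ((-1) ^+ M) *: 'X^M.
Proof.
elim: M => [|M IH]; first by rewrite /R big_ord0 mulr0 expr0 scale1r expr0 subrr.
rewrite R_S mulrDr IH bin0 mulr1 -!mul_polyC exprS !exprSr !rmorphM /= !rmorphN /= !rmorph1. ring.
Qed.

Lemma Rkey b M n : (n < M)%N ->
  ((('X + 1) ^+ b.+1 * R b M)`_n) = (-1) ^+ b * (n == b)%:R.
Proof.
elim: b n => [|b IH] n hn.
  rewrite expr1 R0rel coefB coef1 coefZ coefXn.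
  by rewrite (ltn_eqF hn) mulr0 subr0 expr0 mul1r.
have e : ('X + 1) * R b.+1 M = ((-1) ^+ M.+1 * ('C(M, b.+1))%:R) *: 'X^M - 'X * R b M.
  by rewrite -Rrel addrK.
rewrite exprSr -mulrA e mulrBr coefB -scalerAr coefZ coefMXn hn mulr0 sub0r.
rewrite mulrCA coefXM; case: n hn => [|n] hn /=; first by rewrite oppr0 mulr0.
by rewrite IH 1?ltnW // exprS mulN1r mulNr eqSS.
Qed.

Lemma coef_local (A B P : {poly rat}) M :
  (forall n, (n < M)%N -> A`_n = B`_n) ->
  forall q, (q < M)%N -> (P * A)`_q = (P * B)`_q.
Proof.
move=> h q hq; rewrite !coefM; apply: eq_bigr => k _.
by rewrite h //; apply: leq_ltn_trans hq; apply: leq_subr.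
Qed.

Lemma sum_widen0 (F : nat -> rat) n1 n2 : (n1 <= n2)%N ->
  (forall i, (n1 <= i < n2)%N -> F i = 0) ->
  \sum_(i < n2) F i = \sum_(i < n1) F i.
Proof.
move=> h12 hF; rewrite -!(big_mkord xpredT) (@big_cat_nat _ _ _ n1) //=.
rewrite [X in _ + X]big1_seq ?addr0 // => i /andP[_]; rewrite mem_index_iota; exact: hF.
Qed.

Lemma sum_widen0n (F : nat -> nat) n1 n2 : (n1 <= n2)%N ->
  (forall i, (n1 <= i < n2)%N -> F i = 0%N) ->
  (\sum_(i < n2) F i = \sum_(i < n1) F i)%N.
Proof.
move=> h12 hF; rewrite -!(big_mkord xpredT) (@big_cat_nat _ _ _ n1) //=.
rewrite [X in (_ + X)%N]big1_seq ?addn0 // => i /andP[_]; rewrite mem_index_iota; exact: hF.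
Qed.

Lemma term_id s e f b p t : s = (e + f + b).+1 -> (p + t.+1 <= s)%N ->
  (-1) ^+ (p + t.+1 + 1) / (t.+1)%:R * ('C((s + e + f).+1 - p - 1, s + t.+1 - 1))%:R
    * ('C(s, t.+1 - 1))%:R * ('C(s, s + e - p))%:R / ('C(s - p, t.+1))%:R
  = (-1) ^+ (s + 1) * ((s`! * (e + f)`! * b`!)%:R / ((s + s)`!)%:R)
    * (('C(s + s, (s - t.+1).+1))%:R * ('C(s, s + e - p) * 'C(s + e + f - p, e + f))%N%:R
       * ((-1) ^+ (s - t.+1 - p) * ('C(s - t.+1 - p, b))%:R)) :> rat.
Proof.
move=> hs hpt.
have sg : (-1) ^+ (p + t.+1 + 1) = (-1) ^+ (s + 1) * (-1) ^+ (s - t.+1 - p) :> rat.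
  rewrite -exprD.
  have -> : (s + 1 + (s - t.+1 - p) = (p + t.+1 + 1) + (s - t.+1 - p) * 2)%N by lia.
  by rewrite [RHS]exprD exprM sqrr_sign mulr1.
rewrite sg.
case: (ltnP (s - t.+1 - p) b) => hz.
  rewrite (@bin_small (s - t.+1 - p)) // (@bin_small ((s + e + f).+1 - p - 1)); last by lia.
  by rewrite !mulr0 !mul0r.
have -> : ((s + e + f).+1 - p - 1 = s + e + f - p)%N by lia.
have -> : (s + t.+1 - 1 = s + t)%N by lia.
have -> : (t.+1 - 1 = t)%N by lia.
have -> : ((s - t.+1).+1 = s - t)%N by lia.
have -> : (s - t.+1 - p = s - p - t.+1)%N by lia.
rewrite !natrM.
rewrite (@binE' (s + e + f - p) (s + t)); last by lia.
rewrite (@binE' s t); last by lia.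
rewrite (@binE' (s - p) t.+1); last by lia.
rewrite (@binE' (s + s) (s - t)); last by lia.
rewrite (@binE' (s + e + f - p) (e + f)); last by lia.
rewrite (@binE' (s - p - t.+1) b); last by lia.
have -> : (s + e + f - p - (s + t) = e + f - (p + t))%N by lia.
have -> : (s - p - t.+1 - b = e + f - (p + t))%N by lia.
have -> : (s + s - (s - t) = s + t)%N by lia.
have -> : (s + e + f - p - (e + f) = s - p)%N by lia.
rewrite (factS t) natrM.
field.
by rewrite !fact_neq0 /= addrC natr1 pnatr_eq0.
Qed.


Lemma reidx_gen (G : nat -> rat) p m :
  \sum_(1 <= t < m.+1) G (p + m - t)%N = \sum_(p <= q < p + m) G q.
Proof.
elim: m => [|m IH]; first by rewrite !big_geq ?addn0.
rewrite big_nat_recl // addnS [RHS]big_nat_recr ?leq_addr //=.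
rewrite addrC subn1 /=; congr (_ + _); rewrite -IH.
by apply: eq_bigr => t _; rewrite subSS.
Qed.

Lemma reidx (G : nat -> rat) p s : (p <= s)%N ->
  \sum_(1 <= t < (s - p).+1) G (s - t)%N = \sum_(p <= q < s) G q.
Proof.
move=> hps; have {2 3}-> : s = (p + (s - p))%N by rewrite subnKC.
exact: reidx_gen.
Qed.

Lemma exch (F : nat -> nat -> rat) n :
  \sum_(0 <= p < n.+1) \sum_(p <= q < n) F p q = \sum_(q < n) \sum_(p < q.+1) F p q.
Proof.
transitivity (\sum_(p < n.+1) \sum_(q < n) (if (p <= q)%N then F p q else 0)).
  rewrite big_mkord; apply: eq_bigr => [[p hp]] _ /=.
  rewrite -(big_mkord xpredT (fun q => if (p <= q)%N then F p q else 0)).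
  rewrite [RHS](@big_cat_nat _ _ _ p) //= [X in _ = X + _]big1_seq ?add0r; last first.
    by move=> q /andP[_]; rewrite mem_index_iota => /andP[_ hq]; rewrite leqNgt hq.
  by apply: eq_big_nat => q /andP[hq _]; rewrite hq.
rewrite exchange_big /=; apply: eq_bigr => [[q hq]] _ /=.
rewrite (@sum_widen0 (fun p => if (p <= q)%N then F p q else 0) q.+1); last 2 first.
- exact: ltnW.
- by move=> i /andP[hi _]; rewrite leqNgt hi.
by apply: eq_bigr => [[p hp]] _ /=; rewrite -ltnS hp.
Qed.

Section Main.
Variables e f b : nat.
Let s := (e + f + b).+1.

Definition g (p : nat) : nat := ('C(s, s + e - p) * 'C(s + e + f - p, e + f))%N.
Definition G : {poly rat} := \poly_(p < s.+1) (g p)%:R.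
Definition H : {poly rat} :=
  'X^e * \sum_(k < f.+1) (('C(s, e + k) * 'C(f, f - k))%N%:R *: ('X + 1) ^+ (f - k)).

Lemma coefH0 n : (e + f < n)%N -> H`_n = 0.
Proof.
move=> hn; rewrite /H coefXnM; case: ifP => // _.
rewrite coef_sum big1 // => k _; rewrite coefZ coefX1 (@bin_small (f - k)) ?mulr0 //; lia.
Qed.

Lemma GH : G = ('X + 1) ^+ b.+1 * H.
Proof.
apply/polyP => p; rewrite /H mulrCA coefXnM coef_poly /g.
case: (ltnP p e) => hpe.
  case: ifP => // _; rewrite bin_small ?mul0n //; lia.
rewrite mulr_sumr coef_sum.
under eq_bigr => k _ do rewrite -scalerAr -exprD coefZ coefX1 -natrM.
rewrite -natr_sum.
transitivity ((\sum_(k < f.+1) 'C(s, e + k) * 'C(f, f - k) * 'C(s - (e + k), p - e))%N%:R : rat); last first.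
  congr (_ %:R); apply: eq_bigr => [[k hk]] _ /=; congr (_ * 'C(_, _))%N; lia.
rewrite -core; case: ifP => hps.
  have -> : (s + e - p = s - (p - e))%N by lia.
  rewrite bin_sub; last by lia.
  congr ((_ * 'C(_, _))%N%:R); lia.
case: (leqP (p - e) s) => hu; last by rewrite bin_small.
rewrite (@bin_small (s + f - (p - e))) ?muln0 //; lia.
Qed.

Let a := (s + e + f)%N.
Let K : {poly rat} := H * 'X^b.

Lemma coefK0 q : (s <= q)%N -> K`_q = 0.
Proof.
move=> hq; rewrite /K coefMXn; case: ifP => // _; apply: coefH0; rewrite /s in hq *; lia.
Qed.

Lemma step1 q : (q < s)%N -> (G * R b s)`_q = (-1) ^+ b * K`_q.
Proof.
move=> hq; rewrite GH -mulrA mulrCA.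
rewrite (@coef_local _ ((-1) ^+ b *: 'X^b) _ s) //; first by rewrite -scalerAr coefZ.
by move=> n hn; rewrite Rkey // coefZ coefXn.
Qed.

Lemma step3 : \sum_(q < s) ('C(s + s, q.+1))%:R * K`_q = ((('X + 1) ^+ (s + s)) * K)`_(s + (e + f + b)).
Proof.
rewrite coefMr.
have -> : (s + (e + f + b)).+1 = (s + s)%N by rewrite /s; lia.
rewrite (@sum_widen0 (fun j => (('X + 1) ^+ (s + s))`_(s + (e + f + b) - j) * K`_j) s); last 2 first.
- by rewrite leq_addr.
- by move=> i /andP[hi _]; rewrite coefK0 ?mulr0.
apply: eq_bigr => [[q hq]] _ /=; rewrite coefX1; congr (_ * _); congr (_ %:R).
rewrite -bin_sub; last by rewrite /s in hq *; lia.
congr 'C(_, _); rewrite /s in hq *; lia.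
Qed.

Lemma step4 : ((('X + 1) ^+ (s + s)) * K)`_(s + (e + f + b)) = ((('X + 1) ^+ a) * G)`_a.
Proof.
have -> : ('X + 1 : {poly rat}) ^+ (s + s) = ('X + 1) ^+ a * ('X + 1) ^+ b.+1.
  by rewrite -exprD; congr (_ ^+ _); rewrite /a /s; lia.
rewrite /K GH !mulrA coefMXn ifF; last by rewrite /a; apply/negbTE; rewrite -leqNgt; lia.
by congr (_`_ _); rewrite /a; lia.
Qed.

Lemma step7 : \sum_(p < a.+1) ('C(a, a - p) * g p)%N = ('C(a, s) * 'C(s + s, s + e))%N.
Proof.
transitivity (\sum_(p < a.+1) 'C(a, s) * ('C(s, p) * 'C(s, s + e - p)))%N.
  apply: eq_bigr => [[p hp]] _ /=; rewrite /g bin_sub //.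
  have -> : (s + e + f = a)%N by [].
  rewrite mulnCA trinom; have -> : (a - (e + f) = s)%N by rewrite /a; lia.
  have -> : (e + f = a - s)%N by rewrite /a; lia.
  rewrite bin_sub; last by rewrite /a; lia.
  by rewrite mulnC mulnA.
rewrite -big_distrr /=; congr (_ * _)%N.
rewrite (@sum_widen0n (fun p => 'C(s, p) * 'C(s, s + e - p))%N (s + e).+1); last 2 first.
- by rewrite /a; lia.
- by move=> i /andP[hi _]; rewrite bin_small ?mul0n //; lia.
exact: binomial.Vandermonde.
Qed.

Lemma T_eval : \sum_(q < s) ('C(s + s, q.+1))%:R * (G * R b s)`_q
  = (-1) ^+ b * ('C(a, s) * 'C(s + s, s + e))%N%:R.
Proof.
transitivity ((-1) ^+ b * \sum_(q < s) ('C(s + s, q.+1))%:R * K`_q).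
  rewrite [RHS]mulr_sumr; apply: eq_bigr => [[q hq]] _ /=; by rewrite step1 // mulrCA.
rewrite step3 step4 coefMr -step7 natr_sum; congr (_ * _); apply: eq_bigr => [[p hp]] _ /=.
rewrite coefX1 coef_poly natrM; case: ifP => // hps.
rewrite /g (@bin_small (s + e + f - p)) ?muln0 ?mulr0 //.
move/negbT: hps; rewrite -leqNgt => hps; rewrite /s in hps *; lia.
Qed.

Lemma Tsum : \sum_(q < s) ('C(s + s, q.+1))%:R * (G * R b s)`_q
  = \sum_(q < s) \sum_(p < q.+1)
      (('C(s + s, q.+1))%:R * (g p)%:R * ((-1) ^+ (q - p) * ('C(q - p, b))%:R)).
Proof.
apply: eq_bigr => [[q hq]] _ /=; rewrite coefM mulr_sumr; apply: eq_bigr => [[p hp]] _ /=.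
rewrite coef_poly coefR !ifT ?mulrA //; lia.
Qed.

End Main.

Lemma Umain s e f b : s = (e + f + b).+1 ->
  U s (s + e + f).+1 (s + e) = (-1) ^+ (s + e).+1 * ('C(2 * s, s + e))%:R.
Proof.
move=> hs; rewrite /U.
set k := ((s`! * (e + f)`! * b`!)%:R / ((s + s)`!)%:R : rat).
pose F p q := ('C(s + s, q.+1))%:R * ('C(s, s + e - p) * 'C(s + e + f - p, e + f))%N%:R
   * ((-1) ^+ (q - p) * ('C(q - p, b))%:R) : rat.
have inner : forall p, (0 <= p < s.+1)%N ->
  \sum_(1 <= t < (s - p).+1) ((-1) ^+ (p + t + 1) / t%:R
     * ('C((s + e + f).+1 - p - 1, s + t - 1))%:R * ('C(s, t - 1))%:R
     * ('C(s, s + e - p))%:R / ('C(s - p, t))%:R)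
  = (-1) ^+ (s + 1) * k * \sum_(p <= q < s) F p q.
  move=> p /andP[_ hp]; rewrite -(reidx (F p)) // mulr_sumr.
  apply: eq_big_nat => t /andP[ht1 ht2]; case: t ht1 ht2 => [|t] // _ ht2.
  by rewrite (@term_id s e f b p t hs) //; lia.
rewrite (eq_big_nat _ _ inner) -mulr_sumr exch.
have TS := Tsum e f b; have TE := T_eval e f b; rewrite -hs in TS TE.
have key : \sum_(q < s) \sum_(p < q.+1) F p q
    = (-1) ^+ b * ('C(s + e + f, s) * 'C(s + s, s + e))%N%:R.
  rewrite -TE TS; apply: eq_bigr => q _; apply: eq_bigr => p _.
  by rewrite /F /g -hs.
rewrite key mul2n -addnn.
have sgn : (-1) ^+ (s + (s + e + f).+1 + (s + e)) * (-1) ^+ (s + 1) * (-1) ^+ b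
    = (-1) ^+ (s + e).+1 :> rat.
  rewrite -!exprD.
  have -> : (s + (s + e + f).+1 + (s + e) + (s + 1) + b = (s + e).+1 + (2 * s) * 2)%N by lia.
  by rewrite exprD exprM sqrr_sign mulr1.
rewrite -sgn /k !natrM.
rewrite (@binE' (s + s) (s + e + f).+1); last by lia.
rewrite (@binE' (s + e + f) s); last by lia.
have -> : (s + s - (s + e + f).+1 = b)%N by lia.
have -> : (s + e + f - s = e + f)%N by lia.
rewrite [((s + e + f).+1)`!]factS natrM.
field.
by rewrite !fact_neq0 /= -!natrD -[1]/(1%N%:R) -natrD pnatr_eq0.
Qed.

Theorem corollary6 (s i j : nat) :
  (1 <= s)%N -> (s <= j)%N -> (j < i)%N -> (i <= 2 * s)%N ->
  U s i j = (-1) ^+ j.+1 * ('C(2 * s, j))%:R.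
Proof.
move=> h1 h2 h3 h4.
have [e he] : exists e, j = (s + e)%N by exists (j - s)%N; lia.
have [f hf] : exists f, i = (s + e + f).+1 by exists (i - j - 1)%N; lia.
have [b hb] : exists b, s = (e + f + b).+1 by exists (2 * s - i)%N; lia.
subst i j; exact: Umain hb.
Qed.
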